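(* Let $S=\langle T,\Pi,C\rangle$ be a state space and let $(A_i,\psi_i)$, $1\le i\le k$, be abstractions of $S$ forming an additive abstraction system. Then $h_{add}(t^1,g)\le OPT(t^1,t^2)+h_{add}(t^2,g)$ for all $t^1,t^2,g\in T$.
   Context: A state space is a weighted directed graph $S=\langle T,\Pi,C\rangle$ where $T$ is a finite set of states, $\Pi\subseteq T\times T$ is a set of directed edges, and $C:\Pi\to\mathbb{N}=\{0,1,2,\dots\}$. A path from $u$ to $v$ is a sequence of edges $\langle\pi^1,\dots,\pi^n\rangle$ with $\pi^j=(u^{j-1},u^j)\in\Pi$, $u^0=u$, $u^n=v$; its cost is $C(\pi)=\sum_j C(\pi^j)$. $OPT(u,v)$ is the minimum cost of a path from $u$ to $v$ in $S$ (minima over empty sets are $+\infty$). An abstract state space is $A_i=\langle T_i,\Pi_i,C_i,R_i\rangle$ with $T_i$ a set of abstract states, $\Pi_i\subseteq T_i\times T_i$, and edge weights $C_i,R_i:\Pi_i\to\mathbb{N}$ (primary and residual cost), extended additively to paths. An abstraction of $S$ is a pair $(A_i,\psi_i)$ with $\psi_i:T\to T_i$ such that (1) for every $(u,v)\in\Pi$, $(\psi_i(u),\psi_i(v))\in\Pi_i$, and (2) for every $\pi=(u,v)\in\Pi$, $C_i(\pi_i)+R_i(\pi_i)\le C(\pi)$ where $\pi_i=(\psi_i(u),\psi_i(v))$. The system is additive if for every $\pi\in\Pi$, $\sum_{i=1}^k C_i(\pi_i)\le C(\pi)$. Define $C^*_i(x,y)=\min\{C_i(\rho):\rho\text{ a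 path from }x\text{ to }y\text{ in }A_i\}$ and $h_{add}(t,g)=\sum_{i=1}^k C^*_i(\psi_i(t),\psi_i(g))$. *)

(* Defs.v *)
From Stdlib Require Import ClassicalEpsilon.
From mathcomp Require Import all_boot.
Set Implicit Arguments. Unset Strict Implicit. Unset Printing Implicit Defensive.

(* Extended naturals N ∪ {+oo}: Some n = n, None = +oo. *)
Definition enat := option nat.

Definition eadd (x y : enat) : enat :=
  match x, y with Some a, Some b => Some (a + b) | _, _ => None end.

Definition ele (x y : enat) : Prop :=
  match x, y with
  | _, None => True
  | None, Some _ => False
  | Some a, Some b => a <= b
  end.

Definition nat_inf (P : nat -> Prop) : enat :=
  match excluded_middle_informative (exists n, P n) with
  | left _ => Some (epsilon (inhabits 0%N) (fun m => P m /\ forall n, P n -> m <= n))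
  | right _ => None
  end.

(* A path given by its sequence of visited states after the start u:
   u = u^0, u^1, ..., u^n; each (u^{j-1}, u^j) must be an edge. *)
Fixpoint walk {X : Type} (E : X -> X -> Prop) (u : X) (s : seq X) : Prop :=
  match s with [::] => True | x :: s' => E u x /\ walk E x s' end.

Fixpoint wcost {X : Type} (c : X -> X -> nat) (u : X) (s : seq X) : nat :=
  match s with [::] => 0 | x :: s' => c u x + wcost c x s' end.

Definition is_path {X : Type} (E : X -> X -> Prop) (u v : X) (s : seq X) : Prop :=
  walk E u s /\ last u s = v.

Definition min_cost {X : Type} (E : X -> X -> Prop) (c : X -> X -> nat) (u v : X) : enat :=
  nat_inf (fun n => exists s, is_path E u v s /\ wcost c u s = n).

Definition OPT {T : Type} (Pi : T -> T -> Prop) (C : T -> T -> nat) (u v : T) : enat :=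
  min_cost Pi C u v.

Definition is_abstraction {T Ti : Type} (Pi : T -> T -> Prop) (C : T -> T -> nat)
  (Pii : Ti -> Ti -> Prop) (Ci Ri : Ti -> Ti -> nat) (psi : T -> Ti) : Prop :=
  (forall u v, Pi u v -> Pii (psi u) (psi v)) /\
  (forall u v, Pi u v -> Ci (psi u) (psi v) + Ri (psi u) (psi v) <= C u v).

Definition is_additive {T : Type} (k : nat) (Ti : 'I_k -> Type)
  (Pi : T -> T -> Prop) (C : T -> T -> nat)
  (Ci : forall i, Ti i -> Ti i -> nat) (psi : forall i, T -> Ti i) : Prop :=
  forall u v, Pi u v -> \sum_(i < k) Ci i (psi i u) (psi i v) <= C u v.

Definition h_add {T : Type} (k : nat) (Ti : 'I_k -> Type)
  (Pii : forall i, Ti i -> Ti i -> Prop) (Ci : forall i, Ti i -> Ti i -> nat)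
  (psi : forall i, T -> Ti i) (t g : T) : enat :=
  \big[eadd/Some 0%N]_(i < k) min_cost (Pii i) (Ci i) (psi i t) (psi i g).

(* Main.v *)
Require Import Defs.
From mathcomp Require Import all_boot.
From Stdlib Require Import ClassicalEpsilon.
From mathcomp Require Import zify.

Lemma min_exists (P : nat -> Prop) n : P n -> exists m, P m /\ forall n, P n -> m <= n.
Proof.
move=> Pn.
pose pb x := if excluded_middle_informative (P x) then true else false.
have pbP x : pb x -> P x by rewrite /pb; case: excluded_middle_informative.
have Ppb x : P x -> pb x by rewrite /pb; case: excluded_middle_informative.
have ex : exists x, pb x by exists n; apply: Ppb.
case: (ex_minnP ex) => m Hm Hmin.
exists m; split; first by apply: pbP.
by move=> x Px; apply: Hmin; apply: Ppb.
Qed.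

Lemma nat_inf_le (P : nat -> Prop) n : P n -> exists m, nat_inf P = Some m /\ m <= n.
Proof.
move=> Pn; rewrite /nat_inf; case: excluded_middle_informative => [h|h]; last first.
  by exfalso; apply: h; exists n.
have := epsilon_spec (inhabits 0) (fun m => P m /\ forall n, P n -> m <= n)
  (@min_exists P n Pn).
set e := epsilon _ _ => -[_ H]; exists e; split => //; exact: H.
Qed.

Lemma nat_inf_some (P : nat -> Prop) m : nat_inf P = Some m -> P m.
Proof.
rewrite /nat_inf; case: excluded_middle_informative => [h|h] //= [<-].
have := epsilon_spec (inhabits 0) (fun m => P m /\ forall n, P n -> m <= n).
case: h => n Pn; case/(_ (@min_exists P n Pn)) => //.
Qed.

Lemma nat_inf_none (P : nat -> Prop) : nat_inf P = None -> forall n, ~ P n.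
Proof.
move=> H n Pn; have [m [Hm _]] := @nat_inf_le P n Pn; by rewrite Hm in H.
Qed.

Lemma walk_cat X (E : X -> X -> Prop) u s1 s2 :
  walk E u s1 -> walk E (last u s1) s2 -> walk E u (s1 ++ s2).
Proof. elim: s1 u => //= x s IH u [h1 h2] h3; split => //; exact: IH. Qed.

Lemma wcost_cat X (c : X -> X -> nat) u s1 s2 :
  wcost c u (s1 ++ s2) = wcost c u s1 + wcost c (last u s1) s2.
Proof. by elim: s1 u => //= x s IH u; rewrite IH addnA. Qed.

Lemma walk_map X Y (E : X -> X -> Prop) (F : Y -> Y -> Prop) (f : X -> Y) u s :
  (forall a b, E a b -> F (f a) (f b)) -> walk E u s -> walk F (f u) (map f s).
Proof. move=> Hf; elim: s u => //= x s IH u [h1 h2]; split; [exact: Hf| exact: IH]. Qed.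

Lemma ele_comb x1 w1 y1 x2 w2 y2 :
  ele x1 (eadd (Some w1) y1) -> ele x2 (eadd (Some w2) y2) ->
  ele (eadd x1 x2) (eadd (Some (w1 + w2)) (eadd y1 y2)).
Proof.
case: x1 => [a1|]; case: y1 => [b1|] //=; case: x2 => [a2|]; case: y2 => [b2|] //=; lia.
Qed.

Lemma ele_mono x a b y : ele x (eadd (Some a) y) -> a <= b -> ele x (eadd (Some b) y).
Proof. case: x => [c|]; case: y => [d|] //=; lia. Qed.

Theorem lemma5 (T : finType) (Pi : T -> T -> Prop) (C : T -> T -> nat)
  (k : nat) (Ti : 'I_k -> Type)
  (Pii : forall i, Ti i -> Ti i -> Prop) (Ci Ri : forall i, Ti i -> Ti i -> nat)
  (psi : forall i, T -> Ti i)
  (habs : forall i, is_abstraction Pi C (Pii i) (Ci i) (Ri i) (psi i))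
  (hadd : is_additive Pi C Ci psi) :
  forall t1 t2 g : T,
    ele (h_add Pii Ci psi t1 g) (eadd (OPT Pi C t1 t2) (h_add Pii Ci psi t2 g)).
Proof.
move=> t1 t2 g.
rewrite /OPT /min_cost.
case Ho: (nat_inf _) => [o|]; last by case: (h_add _ _ _ _ _).
have [s [[Hw Hl] Hc]] := @nat_inf_some _ _ Ho.
have Hi : forall i : 'I_k,
  ele (min_cost (Pii i) (Ci i) (psi i t1) (psi i g))
      (eadd (Some (wcost (Ci i) (psi i t1) (map (psi i) s)))
            (min_cost (Pii i) (Ci i) (psi i t2) (psi i g))).
  move=> i; rewrite {2}/min_cost.
  case Hm: (nat_inf _) => [h|]; last by case: (min_cost _ _ _ _).
  have [s2 [[Hw2 Hl2] Hc2]] := @nat_inf_some _ _ Hm.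
  have Hlast : last (psi i t1) (map (psi i) s) = psi i t2 by rewrite last_map Hl.
  have P : is_path (Pii i) (psi i t1) (psi i g) (map (psi i) s ++ s2).
    split; last by rewrite last_cat Hlast.
    apply: walk_cat; first by apply: walk_map Hw => a b; case: (habs i) => H _; exact: H.
    by rewrite Hlast.
  have [m [-> Hmle]] := @nat_inf_le _ _ (ex_intro _ (map (psi i) s ++ s2) (conj P erefl)) :
    exists m, min_cost (Pii i) (Ci i) (psi i t1) (psi i g) = Some m /\ _.
  by move: Hmle; rewrite wcost_cat Hlast Hc2 /=.
have Hsum : \sum_(i < k) wcost (Ci i) (psi i t1) (map (psi i) s) <= o.
  rewrite -Hc; elim: s t1 Hw {Ho Hl Hc Hi} => [|x s IH] u /=.
    by move=> _; rewrite big1.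
  move=> [h1 h2]; rewrite big_split /=.
  apply: leq_add; [exact: hadd | exact: IH].
apply: ele_mono Hsum.
rewrite /h_add.
apply: (big_ind3 (fun x w y => ele x (eadd (Some w) y))) => //.
  by move=> ??????; apply: ele_comb.
Qed.
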